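(* Let $\Gamma$ be a MaxSAT instance encoded with blocking variables $b_1,\dots,b_m$, with $\mathrm{cost}(\Gamma)=k$. Then there is a derivation in the cost-SPR calculus from $\Gamma$ of the unit clauses $b_{i_1},\dots,b_{i_k}$ for some $k$ distinct indices $i_1,\dots,i_k$ and of all unit clauses $\lnot b_j$ for $j\notin\{i_1,\dots,i_k\}$.
   Context: Literals, clauses, CNFs (multisets of clauses), $\mathrm{Var}(\Gamma)$. A substitution $\sigma$ maps each variable to $0$, $1$ or a literal, extended by $\sigma(\lnot x)=\lnot\sigma(x)$, $\sigma(0)=0$, $\sigma(1)=1$; $(\sigma\circ\tau)(x)=\sigma(\tau(x))$. A (partial) assignment has $\sigma(x)\in\{0,1,x\}$; its domain is $\sigma^{-1}(\{0,1\})$; total means all variables get Boolean values. $C{\upharpoonright}_\sigma$: apply $\sigma$ to each literal and simplify; $\sigma\models C$ if the result is $1$ or tautological; $\Gamma{\upharpoonright}_\sigma$ is the multiset of $C{\upharpoonright}_\sigma\neq1$ for $C\in\Gamma$. $\lnot C$ is the partial assignment falsifying all literals of $C$; $\tau\supseteq\rho$ means $\tau$ extends $\rho$. $\Gamma\vdash_1 C$ means unit propagation on $\Gamma{\upharpoonright}_{\lnot C}$ derives the empty clause; $\Gamma\vdash_1\Delta$ means $\Gamma\vdash_1 D$ for all $D\in\Delta$. A MaxSAT instance encoded with blocking variables is a CNF $\Gamma=H\cup\{C_1\lor b_1,\dots,C_m\lor b_m\}$ with distinct fresh variables $b_i$ (blocking variables). $\mathrm{cost}(\alpha)=\sum_i\alpha(b_i)$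 for total $\alpha$; $\mathrm{cost}(\Gamma)=\min\{\mathrm{cost}(\alpha):\alpha\models\Gamma\}$. A clause $C$ is cost-SR w.r.t. $\Gamma$ via $\sigma$ if (1) $\Gamma{\upharpoonright}_{\lnot C}\vdash_1(\Gamma\cup\{C\}){\upharpoonright}_\sigma$ and (2) $\mathrm{cost}(\tau\circ\sigma)\le\mathrm{cost}(\tau)$ for all total $\tau\supseteq\lnot C$. It is cost-SPR if such a $\sigma$ exists that is a partial assignment with the same domain as $\lnot C$. A derivation in the cost-SPR calculus from $\Gamma$ is a sequence $D_1,\dots,D_t$ where each $D_i$ is in $\Gamma$, or follows from earlier clauses by weakening or resolution, or is cost-SPR w.r.t. $\Gamma\cup\{D_1,\dots,D_{i-1}\}$ with $\mathrm{Var}(D_i)\subseteq\mathrm{Var}(\Gamma)$. *)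

(* Defs.v *)
From Stdlib Require Import List Bool Arith.
Import ListNotations.

(** Variables are natural numbers; a literal is (polarity, variable),
    polarity [true] = positive literal x, [false] = negated literal ~x. *)
Definition var := nat.
Definition lit := (bool * var)%type.
Definition clause := list lit.
Definition cnf := list clause.          (* multiset of clauses *)

Definition lit_eqb (l1 l2 : lit) : bool :=
  Bool.eqb (fst l1) (fst l2) && Nat.eqb (snd l1) (snd l2).
Definition neg_lit (l : lit) : lit := (negb (fst l), snd l).

Definition clause_vars (C : clause) : list var := map snd C.
Definition cnf_vars (F : cnf) : list var := flat_map clause_vars F.

Inductive term := TConst (b : bool) | TLit (l : lit).
Definition subst := var -> term.

Definition neg_term (t : term) : term :=
  match t with TConst b => TConst (negb b) | TLit l => TLit (neg_lit l) end.

Definition apply_lit (s : subst) (l : lit) : term :=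
  if fst l then s (snd l) else neg_term (s (snd l)).

(** C|_sigma : [None] means the result is 1 (some literal became 1, or the
    result is tautological); otherwise [Some D] with the 0's removed. *)
Definition restrict_clause (s : subst) (C : clause) : option clause :=
  let ts := map (apply_lit s) C in
  let ls := flat_map (fun t => match t with TLit l => [l] | TConst _ => [] end) ts in
  if existsb (fun t => match t with TConst true => true | _ => false end) ts
     || existsb (fun l => existsb (lit_eqb (neg_lit l)) ls) ls
  then None else Some ls.

Definition restrict_cnf (s : subst) (F : cnf) : cnf :=
  flat_map (fun C => match restrict_clause s C with
                     | None => [] | Some D => [D] end) F.

Definition negC (C : clause) : subst := fun x =>
  if existsb (lit_eqb (true, x)) C then TConst false
  else if existsb (lit_eqb (false, x)) C then TConst true
  else TLit (true, x).

Inductive up_refutes : cnf -> Prop :=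
| up_conflict (F : cnf) : In [] F -> up_refutes F
| up_step (F : cnf) (l : lit) :
    In [l] F -> up_refutes (restrict_cnf (negC [neg_lit l]) F) -> up_refutes F.

Definition implies1 (F : cnf) (C : clause) : Prop :=
  up_refutes (restrict_cnf (negC C) F).
Definition implies1_all (F G : cnf) : Prop :=
  forall D, In D G -> implies1 F D.

Definition asg := var -> bool.
Definition lit_val (a : asg) (l : lit) : bool :=
  if fst l then a (snd l) else negb (a (snd l)).
Definition term_val (a : asg) (t : term) : bool :=
  match t with TConst b => b | TLit l => lit_val a l end.
Definition sat_clause (a : asg) (C : clause) : Prop :=
  exists l, In l C /\ lit_val a l = true.
Definition sat_cnf (a : asg) (F : cnf) : Prop :=
  forall C, In C F -> sat_clause a C.

Definition compose (t : asg) (s : subst) : asg := fun x => term_val t (s x).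

Definition extends_negC (t : asg) (C : clause) : Prop :=
  forall l, In l C -> lit_val t l = false.

Definition cost (bs : list var) (a : asg) : nat :=
  list_sum (map (fun b => if a b then 1 else 0) bs).

Definition cnf_cost_is (bs : list var) (F : cnf) (k : nat) : Prop :=
  (exists a, sat_cnf a F /\ cost bs a = k) /\
  (forall a, sat_cnf a F -> k <= cost bs a).

Definition cost_SR (bs : list var) (F : cnf) (C : clause) (s : subst) : Prop :=
  implies1_all (restrict_cnf (negC C) F) (restrict_cnf s (C :: F)) /\
  (forall t, extends_negC t C -> cost bs (compose t s) <= cost bs t).

Definition is_partial_assignment (s : subst) : Prop :=
  forall x, s x = TConst true \/ s x = TConst false \/ s x = TLit (true, x).

Definition cost_SPR (bs : list var) (F : cnf) (C : clause) : Prop :=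
  exists s, is_partial_assignment s /\
    (forall x, (exists b, s x = TConst b) <-> In x (clause_vars C)) /\
    cost_SR bs F C s.

Definition cspr_step (bs : list var) (G : cnf) (prev : list clause) (D : clause)
  : Prop :=
  In D G
  \/ (exists D', In D' prev /\ incl D' D)
  \/ (exists C1 C2 x, In C1 prev /\ In C2 prev /\
        In (true, x) C1 /\ In (false, x) C2 /\
        (forall l, In l D <->
           ((In l C1 /\ l <> (true, x)) \/ (In l C2 /\ l <> (false, x)))))
  \/ (cost_SPR bs (G ++ prev) D /\ incl (clause_vars D) (cnf_vars G)).

Inductive cspr_derivation (bs : list var) (G : cnf) : list clause -> Prop :=
| deriv_nil : cspr_derivation bs G []
| deriv_snoc (ds : list clause) (D : clause) :
    cspr_derivation bs G ds -> cspr_step bs G ds D ->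
    cspr_derivation bs G (ds ++ [D]).

Definition maxsat_cnf (H : cnf) (Cs : list clause) (bs : list var) : cnf :=
  H ++ map (fun p => fst p ++ [(true, snd p)]) (combine Cs bs).

Definition blocking_ok (H : cnf) (Cs : list clause) (bs : list var) : Prop :=
  length Cs = length bs /\ NoDup bs /\
  (forall b, In b bs -> ~ In b (cnf_vars H) /\ ~ In b (cnf_vars Cs)).

(* Main.v *)
Require Import Defs.
From Stdlib Require Import List Bool Arith Lia.
From Stdlib Require Import Classical.
Import ListNotations.

Definition nc (ws : list var) (be : asg) : clause :=
  map (fun x => (negb (be x), x)) ws.
Definition upd (be : asg) (x : var) (b : bool) : asg :=
  fun y => if Nat.eqb y x then b else be y.

Definition good (G : cnf) (al : asg) (D : clause) : Prop :=
  exists l, In l D /\ lit_val al l = true /\ In (snd l) (cnf_vars G).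
Definition Inv bs G al ds : Prop :=
  cspr_derivation bs G ds /\ incl G ds /\ forall D, In D ds -> good G al D.

Lemma clause_vars_nc ws be : clause_vars (nc ws be) = ws.
Proof. induction ws; simpl; f_equal; auto. Qed.

Lemma in_nc_var l ps be : In l (nc ps be) -> In (snd l) ps.
Proof. unfold nc; intro H; apply in_map_iff in H; destruct H as [z [<- Hz]]; simpl; auto. Qed.

Lemma good_nc G al ps be : incl ps (cnf_vars G) ->
  (exists x, In x ps /\ be x <> al x) -> good G al (nc ps be).
Proof.
  intros Hi [x [Hx Hd]]. exists (negb (be x), x). split.
  - unfold nc. apply (in_map (fun x => (negb (be x), x))). auto.
  - split; [|simpl; apply Hi; auto].
    unfold lit_val; simpl. destruct (al x), (be x); simpl; congruence.
Qed.

Lemma restrict_none s D :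
  (exists l, In l D /\ apply_lit s l = TConst true) -> restrict_clause s D = None.
Proof.
  intros [l [Hl Ha]]. unfold restrict_clause. cbv zeta.
  assert (E : existsb (fun t : term => match t with TConst true => true | _ => false end)
                (map (apply_lit s) D) = true).
  { apply existsb_exists. exists (TConst true). split; [rewrite <- Ha; apply in_map; auto | reflexivity]. }
  rewrite E. reflexivity.
Qed.

Lemma restrict_cnf_nil s L :
  (forall D, In D L -> restrict_clause s D = None) -> restrict_cnf s L = [].
Proof.
  induction L; simpl; intros H; auto.
  rewrite (H a (or_introl eq_refl)). apply IHL. intros; apply H; auto.
Qed.

Lemma deriv_sub bs G : forall L, incl L G -> cspr_derivation bs G L.
Proof.
  induction L using rev_ind; intros H.
  - constructor.
  - apply deriv_snoc.
    + apply IHL. intros z Hz; apply H; apply in_or_app; left; auto.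
    + left. apply H. apply in_or_app; right; left; auto.
Qed.

Lemma inv_snoc bs G al ds D : Inv bs G al ds -> cspr_step bs G ds D -> good G al D ->
  Inv bs G al (ds ++ [D]).
Proof.
  intros [H1 [H2 H3]] Hs Hg. split; [apply deriv_snoc; auto|split].
  - apply incl_appl; auto.
  - intros E HE. apply in_app_or in HE. destruct HE as [HE|[<-|[]]]; auto.
Qed.

Lemma inv_base bs G al : sat_cnf al G -> Inv bs G al G.
Proof.
  intros Hs. split; [apply deriv_sub, incl_refl | split; [apply incl_refl|]].
  intros D HD. destruct (Hs D HD) as [l [Hl Hv]]. exists l. repeat split; auto.
  apply in_flat_map. exists D. split; auto. unfold clause_vars. apply in_map; auto.
Qed.

Section Main.
Lemma stepA bs G al k Ws ds be :
  (forall b, In b bs -> In b (cnf_vars G)) ->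
  cost bs al = k -> (forall a, sat_cnf a G -> k <= cost bs a) ->
  (forall x, In x Ws <-> In x (cnf_vars G)) ->
  Inv bs G al ds -> (exists x, In x Ws /\ be x <> al x) ->
  cspr_step bs G ds (nc Ws be).
Proof.
  intros Hbs Hk Hmin HW [Hder [Hincl Hgood]] Hdiff.
  destruct (classic (exists D, In D G /\ forall l, In l D -> lit_val be l = false))
    as [[D [HD Hf]] | Hno].
  - right; left. exists D. split; [apply Hincl; auto|].
    intros l Hl. destruct l as [p x]. pose proof (Hf _ Hl) as E.
    assert (HxW : In x Ws).
    { apply HW. apply in_flat_map. exists D. split; auto.
      unfold clause_vars. apply (in_map snd) in Hl. exact Hl. }
    unfold nc. apply in_map_iff. exists x; split; auto.
    unfold lit_val in E; simpl in E. destruct p, (be x); simpl in *; congruence.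
  - right; right; right. split.
    2:{ rewrite clause_vars_nc. intros y Hy; apply HW; auto. }
    exists (fun x => if in_dec Nat.eq_dec x Ws then TConst (al x) else TLit (true, x)).
    split; [|split; [|split]].
    + intros x. destruct (in_dec Nat.eq_dec x Ws); [destruct (al x); auto | auto].
    + intros x. rewrite clause_vars_nc. destruct (in_dec Nat.eq_dec x Ws); split; intros Hh.
      * auto.
      * eauto.
      * destruct Hh as [b Hb]; discriminate.
      * contradiction.
    + unfold implies1_all. rewrite restrict_cnf_nil. { intros D []. }
      intros D HD. apply restrict_none.
      assert (Hg : good G al D).
      { destruct HD as [<- | HD].
        - apply good_nc; auto. intros y Hy; apply HW; auto.
        - apply in_app_or in HD. destruct HD as [HD|HD]; apply Hgood; auto. }
      destruct Hg as [l [Hl [Hv Hvar]]]. exists l. split; auto.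
      destruct l as [p x]. unfold apply_lit; simpl in *.
      destruct (in_dec Nat.eq_dec x Ws) as [_|n]; [|exfalso; apply n; apply HW; auto].
      unfold lit_val in Hv; simpl in Hv.
      destruct p; simpl; rewrite Hv; reflexivity.
    + intros t Ht.
      assert (Hag : forall x, In x Ws -> t x = be x).
      { intros x Hx. pose proof (Ht (negb (be x), x)) as E.
        assert (In (negb (be x), x) (nc Ws be)).
        { unfold nc. apply (in_map (fun x => (negb (be x), x))). auto. }
        specialize (E H). unfold lit_val in E; simpl in E.
        destruct (be x), (t x); simpl in *; congruence. }
      replace (cost bs (compose t _)) with (cost bs al).
      * rewrite Hk. apply Hmin. intros D HD.
        destruct (classic (sat_clause be D)) as [[l [Hl Hv]] | Hs].
        -- exists l. split; auto. destruct l as [p x]. unfold lit_val in *; simpl in *.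
           assert (Hx : In x Ws).
           { apply HW. apply in_flat_map. exists D. split; auto.
             unfold clause_vars. apply (in_map snd) in Hl. exact Hl. }
           rewrite Hag; auto.
        -- exfalso. apply Hno. exists D. split; auto. intros l Hl.
           destruct (lit_val be l) eqn:E; auto. exfalso; apply Hs; exists l; auto.
      * unfold cost. f_equal. apply map_ext_in. intros b Hb. unfold compose.
        destruct (in_dec Nat.eq_dec b Ws) as [_|n]; [reflexivity|].
        exfalso; apply n; apply HW; apply Hbs; auto.
Qed.

Lemma nc_app_upd ps x be b : ~ In x ps ->
  nc (ps ++ [x]) (upd be x b) = nc ps be ++ [(negb b, x)].
Proof.
  intros Hx. unfold nc. rewrite map_app. simpl. unfold upd at 2.
  rewrite Nat.eqb_refl. f_equal. apply map_ext_in. intros z Hz. unfold upd.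
  destruct (Nat.eqb_spec z x); [subst; contradiction | reflexivity].
Qed.

Lemma stepB bs G al k Ws :
  (forall b, In b bs -> In b (cnf_vars G)) ->
  cost bs al = k -> (forall a, sat_cnf a G -> k <= cost bs a) ->
  (forall x, In x Ws <-> In x (cnf_vars G)) -> NoDup Ws ->
  forall qs ps be ds, ps ++ qs = Ws -> (exists x, In x ps /\ be x <> al x) ->
  Inv bs G al ds -> exists ds', Inv bs G al ds' /\ incl ds ds' /\ In (nc ps be) ds'.
Proof.
  intros Hbs Hk Hmin HW HND.
  induction qs as [|x qs IH]; intros ps be ds Hps Hd Hinv.
  - rewrite app_nil_r in Hps; subst ps. exists (ds ++ [nc Ws be]). split.
    + apply inv_snoc; auto. eapply stepA; eauto.
      apply good_nc; auto. intros y Hy; apply HW; auto.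
    + split; [apply incl_appl, incl_refl|]. apply in_or_app; right; left; auto.
  - assert (Hx : ~ In x ps).
    { rewrite <- Hps in HND. apply NoDup_remove_2 in HND. intro; apply HND; apply in_or_app; left; auto. }
    assert (Hps' : (ps ++ [x]) ++ qs = Ws) by (rewrite <- app_assoc; exact Hps).
    assert (Hpsi : incl ps (cnf_vars G)).
    { intros z Hz; apply HW; rewrite <- Hps; apply in_or_app; left; auto. }
    destruct Hd as [y [Hy Hyd]].
    assert (Hdb : forall b, exists z, In z (ps ++ [x]) /\ upd be x b z <> al z).
    { intros b. exists y; split; [apply in_or_app; left; auto|].
      unfold upd. destruct (Nat.eqb_spec y x); [subst; contradiction | auto]. }
    destruct (IH (ps ++ [x]) (upd be x true) ds Hps' (Hdb true) Hinv) as [ds1 [Hi1 [Hs1 Hin1]]].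
    destruct (IH (ps ++ [x]) (upd be x false) ds1 Hps' (Hdb false) Hi1) as [ds2 [Hi2 [Hs2 Hin2]]].
    rewrite nc_app_upd in Hin1, Hin2 by auto. simpl in Hin1, Hin2.
    exists (ds2 ++ [nc ps be]). split; [|split].
    + apply inv_snoc; auto.
      * right; right; left.
        exists (nc ps be ++ [(true, x)]), (nc ps be ++ [(false, x)]), x.
        split; [auto|split; [auto|split; [apply in_or_app; right; left; auto|split; [apply in_or_app; right; left; auto|]]]].
        intros l; split.
        -- intros Hl. left. split; [apply in_or_app; left; auto|].
           intro; subst. apply in_nc_var in Hl. simpl in Hl. contradiction.
        -- intros [[Hl Hne] | [Hl Hne]]; apply in_app_or in Hl;
             destruct Hl as [Hl | [Hl | []]]; auto; subst; contradiction.
      * apply good_nc; eauto.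
    + intros z Hz. apply in_or_app; left. auto.
    + apply in_or_app; right; left; auto.
Qed.

Lemma stepC bs G al k :
  (forall b, In b bs -> In b (cnf_vars G)) -> sat_cnf al G ->
  cost bs al = k -> (forall a, sat_cnf a G -> k <= cost bs a) ->
  forall L, incl L (cnf_vars G) ->
  exists ds, Inv bs G al ds /\ forall x, In x L -> In [(al x, x)] ds.
Proof.
  intros Hbs Hsat Hk Hmin. induction L as [|x L IH]; intros HL.
  - exists G. split; [apply inv_base; auto | intros x []].
  - destruct IH as [ds [Hinv Hu]]. { intros z Hz; apply HL; right; auto. }
    set (Ws := x :: nodup Nat.eq_dec (remove Nat.eq_dec x (cnf_vars G))).
    assert (HW : forall y, In y Ws <-> In y (cnf_vars G)).
    { intros y. unfold Ws. simpl. rewrite nodup_In. split.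
      - intros [<- | Hy]; [apply HL; left; auto | apply in_remove in Hy; tauto].
      - intros Hy. destruct (Nat.eq_dec x y); [left; auto | right; apply in_in_remove; auto]. }
    assert (HND : NoDup Ws).
    { unfold Ws. constructor; [|apply NoDup_nodup]. rewrite nodup_In. apply remove_In. }
    destruct (stepB bs G al k Ws Hbs Hk Hmin HW HND
                (nodup Nat.eq_dec (remove Nat.eq_dec x (cnf_vars G))) [x]
                (fun y => negb (al y)) ds eq_refl) as [ds' [Hi' [Hs' Hin']]]; auto.
    { exists x. split; [left; auto | destruct (al x); discriminate]. }
    exists ds'. split; auto. intros y [<- | Hy]; auto.
    unfold nc in Hin'. simpl in Hin'. rewrite negb_involutive in Hin'. auto.
Qed.
End Main.

Lemma blocking_in (Cs : list clause) : forall bs : list var, length Cs = length bs -> forall b, In b bs ->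
  exists C, In (C ++ [(true, b)]) (map (fun p => fst p ++ [(true, snd p)]) (combine Cs bs)).
Proof.
  induction Cs as [|C Cs IH]; intros [|b0 bs] Hl b Hb; simpl in *; try discriminate; try contradiction.
  destruct Hb as [<- | Hb].
  - exists C. left; auto.
  - destruct (IH bs (eq_add_S _ _ Hl) b Hb) as [C' HC]. exists C'. right; auto.
Qed.

Lemma count_shift (f : var -> bool) b bs : forall n s,
  length (filter (fun i => f (nth i (b :: bs) 0)) (seq (S s) n)) =
  length (filter (fun i => f (nth i bs 0)) (seq s n)).
Proof.
  induction n; intros s; simpl; auto.
  destruct (f (nth s bs 0)); simpl; rewrite IHn; auto.
Qed.

Lemma count_cost (f : var -> bool) bs :
  length (filter (fun i => f (nth i bs 0)) (seq 0 (length bs))) =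
  list_sum (map (fun b => if f b then 1 else 0) bs).
Proof.
  induction bs as [|b bs IH]; auto.
  pose proof (count_shift f b bs (length bs) 0) as E.
  change (seq 0 (length (b :: bs))) with (0 :: seq 1 (length bs)).
  cbn [filter map list_sum]. change (nth 0 (b :: bs) 0) with b.
  destruct (f b); simpl; [f_equal|]; (etransitivity; [exact E | exact IH]).
Qed.

Theorem theorem4p3 (H : cnf) (Cs : list clause) (bs : list var) (k : nat) :
  blocking_ok H Cs bs ->
  cnf_cost_is bs (maxsat_cnf H Cs bs) k ->
  exists (ds : list clause) (I : list nat),
    cspr_derivation bs (maxsat_cnf H Cs bs) ds /\
    NoDup I /\ length I = k /\
    (forall i, In i I -> i < length bs) /\
    (forall i, In i I -> In [(true, nth i bs 0)] ds) /\
    (forall j, j < length bs -> ~ In j I -> In [(false, nth j bs 0)] ds).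
Proof.
  intros [Hlen _] [[al [Hsat Hcost]] Hmin].
  assert (Hbs : forall b, In b bs -> In b (cnf_vars (maxsat_cnf H Cs bs))).
  { intros b Hb. destruct (blocking_in Cs bs Hlen b Hb) as [C HC].
    apply in_flat_map. exists (C ++ [(true, b)]). split.
    - unfold maxsat_cnf. apply in_or_app; right; auto.
    - unfold clause_vars. rewrite map_app. apply in_or_app; right; left; auto. }
  destruct (stepC bs _ al k Hbs Hsat Hcost Hmin bs Hbs) as [ds [[Hder _] Hu]].
  exists ds, (filter (fun i => al (nth i bs 0)) (seq 0 (length bs))).
  split; [auto|split; [|split; [|split; [|split]]]].
  - apply NoDup_filter, seq_NoDup.
  - rewrite count_cost. exact Hcost.
  - intros i Hi. apply filter_In in Hi. destruct Hi as [Hi _]. apply in_seq in Hi. lia.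
  - intros i Hi. apply filter_In in Hi. destruct Hi as [Hi E]. apply in_seq in Hi.
    rewrite <- E. apply Hu. apply nth_In. lia.
  - intros j Hj Hn. destruct (al (nth j bs 0)) eqn:E.
    + exfalso. apply Hn. apply filter_In. split; auto. apply in_seq. lia.
    + rewrite <- E. apply Hu. apply nth_In. lia.
Qed.
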